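(* Let $u$ generate a cyclic group of order $q$ (a power of 2) and let $0<\ell,k\le q/2$ be odd integers. Then there is a decomposition $V(2\ell)\otimes V(2k)=W\perp W'$ into $K[u]$-submodules $W,W'$ that are orthogonal with respect to the tensor product form, such that $W\cong\operatorname{Ind}_{\langle u^2\rangle}^{\langle u\rangle}(V_\ell\otimes V_k)\cong W'$ as $K[u]$-modules.
   Context: $K$ is algebraically closed of characteristic 2; $V_d$ is the $d$-dimensional indecomposable module for a cyclic 2-group (one unipotent Jordan block). For $d=2m$ even, $V(d)$ is $V_d$ with basis $e_1,\dots,e_d$, $ue_1=e_1$, $ue_i=e_i+\cdots+e_1$ ($2\le i\le m+1$), $ue_i=e_i+e_{i-1}$ ($m+1<i\le d$), form $b(e_i,e_j)=1$ iff $i+j=d+1$. The tensor product of bilinear modules $(V,b)\otimes(V',b')$ carries the form $(v_1\otimes v_1',v_2\otimes v_2')\mapsto b(v_1,v_2)b'(v_1',v_2')$. $\operatorname{Ind}_H^G(M)=K[G]\otimes_{K[H]}M$. *)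

(* Defs.v *)
From HB Require Import structures.
From mathcomp Require Import all_boot all_order all_algebra.
Set Implicit Arguments. Unset Strict Implicit. Unset Printing Implicit Defensive.
Import GRing.Theory.
Local Open Scope ring_scope.

(* Conventions: a K[u]-module of dimension n is K^n (row vectors 'rV_n) with
   the generator u acting by the matrix g : 'M_n via  v |-> v *m g.
   Thus row i of g is the coordinate vector of u e_i (0-based indices). *)

(* Kronecker (tensor) product of matrices; the basis of K^m1 (x) K^m2 is
   e_(i1) (x) e_(i2) indexed by mxvec_index i1 i2 = i1 * m2 + i2. *)
Definition kron (R : pzRingType) m1 n1 m2 n2
    (A : 'M[R]_(m1, n1)) (B : 'M[R]_(m2, n2)) : 'M[R]_(m1 * m2, n1 * n2) :=
  \matrix_(i, j) \sum_(i1 < m1) \sum_(i2 < m2) \sum_(j1 < n1) \sum_(j2 < n2)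
     (((i == mxvec_index i1 i2) && (j == mxvec_index j1 j2))%:R
        * A i1 j1 * B i2 j2).

(* V(2m): u e_1 = e_1, u e_i = e_i + ... + e_1 (2 <= i <= m+1),
   u e_i = e_i + e_(i-1) (m+1 < i <= 2m).  0-based: row i. *)
Definition Vmx (K : pzRingType) (m : nat) : 'M[K]_(2 * m) :=
  \matrix_(i, j) (if (i <= m)%N then (j <= i)%N%:R
                  else ((j == i) || (j.+1 == i))%:R).

(* Gram matrix of the form on V(2m): b(e_i, e_j) = 1 iff i + j = d + 1
   (1-based), i.e. i + j = 2m - 1 (0-based). *)
Definition Vform (K : pzRingType) (m : nat) : 'M[K]_(2 * m) :=
  \matrix_(i, j) ((i + j)%N == (2 * m).-1)%:R.

(* V_n: one unipotent Jordan block: u e_i = e_i + e_(i-1). *)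
Definition Jblock (K : pzRingType) (n : nat) : 'M[K]_n :=
  \matrix_(i, j) ((j == i) || (j.+1 == i))%:R.

(* Ind from <u^2> to <u> of a K[u^2]-module M (u^2 acting by a : 'M_p):
   K[<u>] (x)_{K[<u^2>]} M has basis 1 (x) m_i (first p), u (x) m_i (last p);
   u.(1 (x) m) = u (x) m,  u.(u (x) m) = 1 (x) (u^2 . m). *)
Definition Indmx (K : pzRingType) (p : nat) (a : 'M[K]_p) : 'M[K]_(p + p) :=
  block_mx 0 1%:M a 0.

(* Main.v *)
Require Import Defs.
From HB Require Import structures.
From mathcomp Require Import all_boot all_order all_algebra.
From mathcomp Require Import zify.
From mathcomp.real_closed Require Import mxtens.
Import GRing.Theory.
Local Open Scope ring_scope.
Set Implicit Arguments. Unset Strict Implicit. Unset Printing Implicit Defensive.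

Lemma two0 (K : fieldType) (hK : (2 \in [pchar K])%N) : 2%:R = 0 :> K.
Proof. exact: (pcharf0 hK). Qed.

Lemma natr_odd (K : fieldType) (hK : (2 \in [pchar K])%N) n :
  n%:R = (odd n)%:R :> K.
Proof.
rewrite -{1}(odd_double_half n) natrD -muln2 natrM two0 // mulr0 addr0.
by case: (odd n).
Qed.

Lemma sum_bool (K : fieldType) n (p : 'I_n -> bool) :
  \sum_(i < n) (p i)%:R = (\sum_(i < n) p i)%N%:R :> K.
Proof. by rewrite natr_sum. Qed.

Lemma cnt_int n lo hi :
  (\sum_(i < n) ((lo <= i) && (i < hi)))%N = (minn hi n - lo)%N.
Proof.
elim: n => [|n IH]; first by rewrite big_ord0; lia.
rewrite big_ord_recr /= IH.
case: (leqP lo n) => h1; case: (ltnP n hi) => h2 /=; lia.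
Qed.

Definition Nm (K : fieldType) m := Vmx K m - 1%:M.

Lemma NE (K : fieldType) m (i j : 'I_(2 * m)) :
  Nm K m i j = (if (i <= m)%N then (j < i)%N else (j.+1 == i)%N)%:R.
Proof.
rewrite /Nm !mxE.
have -> : (i == j) = (nat_of_ord i == nat_of_ord j) by [].
have -> : (j == i) = (nat_of_ord j == nat_of_ord i) by [].
case: ifP => h; case: (ssrnat.ltngtP i j) => h' /=.
all: try (rewrite (_ : (nat_of_ord i == nat_of_ord j) = false); last lia).
all: try (rewrite (_ : (nat_of_ord i == nat_of_ord j) = true); last lia).
all: rewrite ?subr0 ?subrr //.
all: try (rewrite (_ : (j.+1 == i)%N = false); last lia).
all: try (rewrite (_ : (j.+1 == i)%N = true); last lia).
all: try (rewrite (_ : (nat_of_ord j == nat_of_ord i) = false); last lia).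
all: try (rewrite (_ : (nat_of_ord j == nat_of_ord i) = true); last lia).
all: rewrite ?subr0 ?subrr //.
Qed.

Lemma N_le (K : fieldType) m (i j : 'I_(2 * m)) : (i <= j)%N -> Nm K m i j = 0.
Proof.
move=> h; rewrite NE; case: ifP => _.
  by rewrite (_ : (j < i)%N = false) //; lia.
by rewrite (_ : (j.+1 == i)%N = false) //; lia.
Qed.

Lemma N_sub (K : fieldType) m (i j : 'I_(2 * m)) : (j.+1 = i)%N -> Nm K m i j = 1.
Proof.
move=> h; rewrite NE; case: ifP => _.
  by rewrite (_ : (j < i)%N = true) //; lia.
by rewrite (_ : (j.+1 == i)%N = true) //; lia.
Qed.

Definition xv (K : fieldType) m : 'rV[K]_(2 * m) :=
  \row_j ((nat_of_ord j == (2 * m).-1)%N)%:R.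

Definition kry (K : fieldType) m t : 'rV[K]_(2 * m) := xv K m *m Nm K m ^+ t.

Lemma kryE (K : fieldType) m t (j : 'I_(2 * m)) :
  ((2 * m).-1 <= j + t)%N -> kry K m t 0 j = ((j + t)%N == (2 * m).-1)%:R.
Proof.
elim: t j => [|t IH] j hj.
  by rewrite /kry expr0 mulmx1 mxE addn0.
rewrite /kry exprSr mulmxA mxE.
have -> : \sum_a (xv K m *m Nm K m ^+ t) 0 a * Nm K m a j =
   \sum_(a < 2 * m) ((j.+1 <= a) && (a < j.+1 + ((j + t.+1)%N == (2 * m).-1)))%N%:R.
  apply: eq_bigr => a _.
  case: (ssrnat.ltngtP a j.+1) => ha.
  - rewrite N_le; last lia.
    by rewrite mulr0 (_ : (_ && _) = false) //; lia.
  - rewrite -/(kry K m t) IH; last lia.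
    rewrite (_ : ((a + t)%N == (2 * m).-1) = false); last lia.
    by rewrite mul0r (_ : (_ && _) = false) //; lia.
  - rewrite N_sub; last lia.
    rewrite -/(kry K m t) IH; last lia.
    by rewrite mulr1; congr (_%:R); lia.
rewrite sum_bool cnt_int; congr (_%:R); lia.
Qed.

Lemma oddE n : odd n -> n = (n./2).*2.+1.
Proof. by move=> o; rewrite -{1}(odd_double_half n) o. Qed.
Lemma evenE n : ~~ odd n -> n = (n./2).*2.
Proof. by move=> /negPf o; rewrite -{1}(odd_double_half n) o. Qed.

Lemma N2par (K : fieldType) (hK : (2 \in [pchar K])%N) m (hm : odd m)
   (a j : 'I_(2 * m)) :
  odd a -> ~~ odd j -> (Nm K m *m Nm K m) a j = 0.
Proof.
move=> oa ej; have Ha := oddE oa; have Hj := evenE ej; have Hm := oddE hm.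
rewrite mxE; case: (leqP a m) => ha.
- rewrite (eq_bigr (fun c : 'I_(2 * m) => ((j.+1 <= c) && (c < a))%N%:R)).
    rewrite sum_bool cnt_int (natr_odd hK).
    rewrite (_ : odd _ = false) //.
    rewrite (_ : minn a (2 * m) = a); last lia.
    case: (leqP j.+1 a) => h; last by rewrite (_ : (a - j.+1)%N = 0%N) //; lia.
    by rewrite oddB //= oa (negPf ej).
  move=> c _; rewrite (@NE _ _ a c) ha.
  case: (ltnP c a) => hc.
    by rewrite mul1r NE (_ : (c <= m)%N = true) //; [congr (_%:R); lia | lia].
  by rewrite mul0r (_ : (_ && _) = false) //; lia.
- rewrite big1 // => c _; rewrite (@NE _ _ a c) (_ : (a <= m)%N = false); last lia.
  case: eqP => hc; last by rewrite mul0r.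
  rewrite mul1r NE (_ : (c <= m)%N = false); last lia.
  by rewrite (_ : (j.+1 == c)%N = false) //; lia.
Qed.

Lemma kry_par (K : fieldType) (hK : (2 \in [pchar K])%N) m (hm : odd m) s
   (j : 'I_(2 * m)) : ~~ odd j -> kry K m (2 * s) 0 j = 0.
Proof.
elim: s j => [|s IH] j ej.
  rewrite /kry expr0 mulmx1 mxE (_ : (nat_of_ord j == (2 * m).-1)%N = false) //.
  have Hj := evenE ej; have [m0|mp] := posnP m; first by move: (ltn_ord j); lia.
  lia.
rewrite /kry (_ : (2 * s.+1 = 2 * s + 2)%N); last lia.
rewrite exprD expr2 mulmxA mxE big1 // => a _.
case oa: (odd a).
  by rewrite N2par ?oa // mulr0.
by rewrite -/(kry K m (2 * s)) IH ?oa // mul0r.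
Qed.

Lemma sum_delta (K : fieldType) n (F : 'I_n -> K) (k : 'I_n) :
  \sum_(a < n) ((nat_of_ord a == k)%N)%:R * F a = F k.
Proof.
rewrite (bigD1 k) //= eqxx mul1r big1 ?addr0 // => a /negPf.
by rewrite -val_eqE /= => ->; rewrite mul0r.
Qed.

Lemma VmxE (K : fieldType) m (i a : 'I_(2 * m)) :
  Vmx K m i a = (if (i <= m)%N then (a <= i)%N
                 else ((nat_of_ord a == i) || (a.+1 == i))%N)%:R.
Proof. by rewrite mxE; case: ifP. Qed.

Lemma natrb (K : fieldType) (b1 b2 : bool) : (b1%:R * b2%:R : K) = (b1 && b2)%:R.
Proof. by rewrite -natrM mulnb. Qed.

Lemma fin_odd c (b : bool) : (c == 1)%N = b -> (c <= 2)%N -> odd c = b.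
Proof. by case: c => [|[|[|c]]] //= <-. Qed.

Lemma VB (K : fieldType) m (i b : 'I_(2 * m)) :
  (Vmx K m *m Vform K m) i b = Vmx K m i (rev_ord b).
Proof.
rewrite mxE -(sum_delta (Vmx K m i) (rev_ord b)); apply: eq_bigr => a _.
rewrite [Vform K m a b]mxE mulrC; congr (_%:R * _) => /=.
move: (ltn_ord a) (ltn_ord b); lia.
Qed.

Lemma Vinv (K : fieldType) (hK : (2 \in [pchar K])%N) m :
  Vmx K m *m Vform K m *m (Vmx K m)^T = Vform K m.
Proof.
apply/matrixP => i j; rewrite mxE.
rewrite (eq_bigr (fun b : 'I_(2 * m) =>
   ((if (i <= m)%N then ((2 * m - b.+1) <= i)%N
     else (((2 * m - b.+1) == i) || ((2 * m - b.+1).+1 == i))%N) &&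
    (if (j <= m)%N then (b <= j)%N
     else ((nat_of_ord b == j) || (b.+1 == j))%N))%:R)); last first.
  move=> b _; rewrite VB [(Vmx K m)^T b j]mxE !VmxE natrb.
  by [].
rewrite -natr_sum [RHS]mxE (natr_odd hK) [in RHS](natr_odd hK); congr (_%:R).
have hi := ltn_ord i; have hj := ltn_ord j; rewrite oddb; apply: congr1.
case: (leqP i m) => hi'; case: (leqP j m) => hj'.
- rewrite (eq_bigr (fun b : 'I_(2 * m) => nat_of_bool (((2 * m).-1 - i <= b) && (b < j.+1))%N)); last first.
    by move=> b _; move: (ltn_ord b); lia.
  rewrite cnt_int; apply: fin_odd; lia.
- rewrite (eq_bigr (fun b : 'I_(2 * m) => nat_of_bool ((maxn ((2 * m).-1 - i) j.-1 <= b) && (b < j.+1))%N)); last first.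
    by move=> b _; move: (ltn_ord b); lia.
  rewrite cnt_int; apply: fin_odd; lia.
- rewrite (eq_bigr (fun b : 'I_(2 * m) => nat_of_bool (((2 * m).-1 - i <= b) && (b < (minn (2 * m - i) j).+1))%N)); last first.
    by move=> b _; move: (ltn_ord b); lia.
  rewrite cnt_int; apply: fin_odd; lia.
- rewrite (eq_bigr (fun b : 'I_(2 * m) => nat_of_bool ((0 <= b) && (b < 0))%N)); last first.
    by move=> b _; move: (ltn_ord b); lia.
  rewrite cnt_int; apply: fin_odd; lia.
Qed.

Definition Pm (K : fieldType) m : 'M[K]_(m, 2 * m) :=
  \matrix_(i < m, j < 2 * m) kry K m (2 * (m.-1 - i)) 0 j.

Lemma PM (K : fieldType) m p (M : 'M[K]_(2 * m, p)) i j :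
  (Pm K m *m M) i j = (kry K m (2 * (m.-1 - i)) *m M) 0 j.
Proof. by rewrite !mxE; apply: eq_bigr => a _; rewrite mxE. Qed.

Lemma P_iso (K : fieldType) (hK : (2 \in [pchar K])%N) m (hm : odd m) :
  Pm K m *m Vform K m *m (Pm K m)^T = 0.
Proof.
apply/matrixP => i j; rewrite !mxE big1 // => b _.
case ob: (odd b).
  rewrite mxE big1 ?mul0r // => a _.
  rewrite [Vform K m a b]mxE.
  case e: ((a + b)%N == (2 * m).-1); last by rewrite mulr0.
  rewrite mxE kry_par ?mul0r //.
  have h1 := ltn_ord b; have h2 := ltn_ord a.
  move: (oddE hm) (oddE ob) => Hm Hb.
  apply/negP => oa; have Ha := oddE oa; move/eqP: e; lia.
by rewrite [(Pm K m)^T b j]mxE [Pm K m j b]mxE kry_par ?mulr0 // ob.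
Qed.

Lemma sq1 (K : fieldType) (hK : (2 \in [pchar K])%N) n (N : 'M[K]_n) :
  (N + 1%:M) *m (N + 1%:M) = 1%:M + N *m N.
Proof.
rewrite mulmxDl !mulmxDr !mulmx1 mul1mx.
have h0 : N + N = 0 by rewrite -mulr2n -scaler_nat two0 // scale0r.
by rewrite -!addrA [N + (_ + _)]addrA h0 add0r addrC.
Qed.

Lemma gsq (K : fieldType) (hK : (2 \in [pchar K])%N) m :
  Vmx K m *m Vmx K m = 1%:M + Nm K m *m Nm K m.
Proof.
have E : Vmx K m = Nm K m + 1%:M by rewrite /Nm subrK.
by rewrite -sq1 // -E.
Qed.

Lemma kry2 (K : fieldType) m t :
  kry K m t *m (Nm K m *m Nm K m) = kry K m (t + 2).
Proof. by rewrite /kry -mulmxA exprD expr2. Qed.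

Lemma P_hom (K : fieldType) (hK : (2 \in [pchar K])%N) m :
  Pm K m *m Vmx K m *m Vmx K m = Jblock K m *m Pm K m.
Proof.
rewrite -mulmxA gsq // mulmxDr mulmx1.
apply/matrixP => i j; rewrite [LHS]mxE PM kry2.
rewrite [RHS]mxE (eq_bigr (fun a => ((nat_of_ord a == i)%N)%:R * Pm K m a j +
                          ((a.+1 == i)%N)%:R * Pm K m a j)); last first.
  move=> a _; rewrite mxE -mulrDl; congr (_ * _).
  have -> : (a == i) = (nat_of_ord a == i) by [].
  case: eqP => h1; case: eqP => h2 //=; try lia.
  by rewrite addr0.
  by rewrite add0r.
  by rewrite addr0.
rewrite big_split /= sum_delta; congr (_ + _).
case: (posnP i) => hi.
  rewrite big1; last by move=> a _; rewrite hi mul0r.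
  rewrite kryE; last by move: (ltn_ord i); lia.
  rewrite (_ : (_ == _) = false) //; move: (ltn_ord i); lia.
have hi' : (i.-1 < m)%N by move: (ltn_ord i); lia.
rewrite (eq_bigr (fun a => ((nat_of_ord a == Ordinal hi')%N)%:R * Pm K m a j)); last first.
  by move=> a _ /=; congr (_%:R * _); lia.
rewrite sum_delta [RHS]mxE /=.
have -> : (2 * (m.-1 - i) + 2 = 2 * (m.-1 - i.-1))%N by move: (ltn_ord i); lia.
by [].
Qed.

Lemma colSl (K : fieldType) m1 m2 n (A : 'M[K]_(m1, n)) (B : 'M[K]_(m2, n)) :
  (A <= col_mx A B)%MS.
Proof. by have := submx_refl (col_mx A B); rewrite col_mx_sub => /andP[]. Qed.
Lemma colSr (K : fieldType) m1 m2 n (A : 'M[K]_(m1, n)) (B : 'M[K]_(m2, n)) :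
  (B <= col_mx A B)%MS.
Proof. by have := submx_refl (col_mx A B); rewrite col_mx_sub => /andP[]. Qed.

Definition KR (K : fieldType) m : 'M[K]_(2 * m) :=
  \matrix_(i, j) kry K m ((2 * m).-1 - i) 0 j.

Lemma KR_unit (K : fieldType) m : KR K m \in unitmx.
Proof.
rewrite unitmxE det_trig.
  rewrite big1 ?unitr1 // => i _; rewrite mxE kryE; last lia.
  by rewrite (_ : (_ == _) = true) //; move: (ltn_ord i); lia.
apply/is_trig_mxP => i j hij; rewrite mxE kryE; last lia.
by rewrite (_ : (_ == _) = false) //; move: (ltn_ord i); lia.
Qed.

Lemma rowP_kry (K : fieldType) m (i : 'I_m) :
  row i (Pm K m) = kry K m (2 * (m.-1 - i)).
Proof. by apply/rowP => j; rewrite !mxE. Qed.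

Lemma C_full (K : fieldType) m :
  row_full (col_mx (Pm K m) (Pm K m *m Vmx K m)).
Proof.
set C := col_mx _ _.
rewrite -sub1mx; apply: (submx_trans (B := KR K m)).
  by rewrite sub1mx row_full_unit KR_unit.
apply/row_subP => i.
have -> : row i (KR K m) = kry K m ((2 * m).-1 - i) by apply/rowP => j; rewrite !mxE.
have hi := ltn_ord i.
set t := ((2 * m).-1 - i)%N.
have hs : (m.-1 - t./2 < m)%N by lia.
have Hr : kry K m (2 * t./2) = row (Ordinal hs) (Pm K m).
  by rewrite rowP_kry /=; congr kry; lia.
have HP : (row (Ordinal hs) (Pm K m) <= C)%MS.
  exact: submx_trans (row_sub _ _) (colSl _ _).
case ot: (odd t).
  have -> : t = (2 * t./2).+1 by rewrite {1}(oddE ot); lia.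
  have -> : kry K m (2 * t./2).+1 = kry K m (2 * t./2) *m Vmx K m - kry K m (2 * t./2).
    by rewrite -[X in _ = _ - X]mulmx1 -mulmxBr /kry exprSr mulmxA.
  rewrite Hr; apply: addmx_sub; last by rewrite eqmx_opp.
  rewrite -row_mul; exact: submx_trans (row_sub _ _) (colSr _ _).
have -> : t = (2 * t./2) by rewrite {1}(evenE (negbT ot)); lia.
by rewrite Hr.
Qed.

Lemma J_unit (K : fieldType) m : Jblock K m \in unitmx.
Proof.
rewrite unitmxE det_trig.
  by rewrite big1 ?unitr1 // => i _; rewrite mxE eqxx.
apply/is_trig_mxP => i j hij; rewrite mxE.
have -> : (j == i) = (nat_of_ord j == i) by [].
by rewrite (_ : (_ || _) = false) //; lia.
Qed.

Lemma P_iso1 (K : fieldType) (hK : (2 \in [pchar K])%N) m (hm : odd m) :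
  (Pm K m *m Vmx K m) *m Vform K m *m (Pm K m *m Vmx K m)^T = 0.
Proof.
rewrite trmx_mul.
have -> : Pm K m *m Vmx K m *m Vform K m *m ((Vmx K m)^T *m (Pm K m)^T) =
   Pm K m *m (Vmx K m *m Vform K m *m (Vmx K m)^T) *m (Pm K m)^T.
  by rewrite !mulmxA.
by rewrite Vinv // P_iso.
Qed.


Lemma index_allpairs (T1 T2 : eqType) (s : seq T1) (t : seq T2) x y :
  x \in s -> y \in t ->
  index (x, y) [seq (a, b) | a <- s, b <- t] = (index x s * size t + index y t)%N.
Proof.
have pinj (a : T1) : injective (pair a : T2 -> T1 * T2) by move=> b1 b2 [].
elim: s => [|a s IH] //= xs yt.
rewrite index_cat.
have [-> | ne] := eqVneq a x.
  rewrite (mem_map (pinj x)) yt mul0n add0n.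
  by rewrite (index_map (pinj x)).
rewrite (_ : (x, y) \in _ = false); last first.
  by apply/negP => /mapP [b _ [e _]]; rewrite e eqxx in ne.
rewrite IH //; first by rewrite size_map mulSn addnA.
by move: xs; rewrite inE eq_sym (negPf ne).
Qed.

Lemma mxvec_val m n (i : 'I_m) (j : 'I_n) :
  nat_of_ord (mxvec_index i j) = (i * n + j)%N.
Proof.
rewrite /mxvec_index /= /enum_rank enum_rank_in.unlock insubdK.
  have E : Finite.enum ('I_m * 'I_n)%type = prod_enum 'I_m 'I_n.
    by rewrite unlock.
  rewrite enumT E.
  rewrite /prod_enum.
  rewrite index_allpairs ?mem_enum // size_enum_ord !index_enum_ord //.
by rewrite cardE [_ \in _]index_mem mem_enum.
Qed.

Lemma idx_eq m n (i a : 'I_m) (j b : 'I_n) :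
  (mxtens_index (i, j) == mxvec_index a b) =
  ((nat_of_ord a == i) && (nat_of_ord b == j))%N.
Proof.
rewrite -[_ == _]/(nat_of_ord (mxtens_index (i, j)) == nat_of_ord (mxvec_index a b))%N.
rewrite mxvec_val /= eq_addl_mul ?ltn_ord // xpair_eqE.

Qed.

Lemma kron_tens (K : fieldType) m1 n1 m2 n2 (A : 'M[K]_(m1, n1)) (B : 'M[K]_(m2, n2)) :
  kron A B = A *t B.
Proof.
apply/matrixP => i j.
case: (mxtens_indexP i) => i1 i2; case: (mxtens_indexP j) => j1 j2.
rewrite tensmxE mxE.
rewrite [RHS](_ : _ = (\sum_(a1 < m1) ((nat_of_ord a1 == i1)%N)%:R *
              \sum_(a2 < m2) ((nat_of_ord a2 == i2)%N)%:R *
              \sum_(b1 < n1) ((nat_of_ord b1 == j1)%N)%:R *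
              \sum_(b2 < n2) ((nat_of_ord b2 == j2)%N)%:R * (A a1 b1 * B a2 b2))); last by rewrite !sum_delta.
  symmetry.
  apply: eq_bigr => a1 _; rewrite !mulr_sumr; apply: eq_bigr => a2 _.
  rewrite !mulr_sumr; apply: eq_bigr => b1 _; rewrite !mulr_sumr; apply: eq_bigr => b2 _.
  rewrite !idx_eq.
  by do 4!case: eqP => _; rewrite /= ?mul0r ?mul1r ?mulr0 ?mulrA.
Qed.

Lemma tensmxDl (K : fieldType) m n p q (X Y : 'M[K]_(m, n)) (C : 'M[K]_(p, q)) :
  (X + Y) *t C = X *t C + Y *t C.
Proof. by apply/matrixP => i j; rewrite !mxE mulrDl. Qed.
Lemma tensmxDr (K : fieldType) m n p q (X Y : 'M[K]_(m, n)) (C : 'M[K]_(p, q)) :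
  C *t (X + Y) = C *t X + C *t Y.
Proof. by apply/matrixP => i j; rewrite !mxE mulrDr. Qed.

Lemma tens_subL (K : fieldType) m n r p q (E : 'M[K]_(r, m)) (A : 'M[K]_(m, n))
   (C : 'M[K]_(p, q)) : ((E *m A) *t C <= A *t C)%MS.
Proof.
by rewrite -[C in X in (X <= _)%MS]mul1mx -tensmx_mul submxMl.
Qed.
Lemma tens_subR (K : fieldType) m n r p q (E : 'M[K]_(r, m)) (A : 'M[K]_(m, n))
   (C : 'M[K]_(p, q)) : (C *t (E *m A) <= C *t A)%MS.
Proof.
by rewrite -[C in X in (X <= _)%MS]mul1mx -tensmx_mul submxMl.
Qed.

Lemma col_split (K : fieldType) m1 m2 n (A : 'M[K]_(m1, n)) (B : 'M[K]_(m2, n)) :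
  col_mx A B = col_mx 1%:M 0 *m A + col_mx 0 1%:M *m B.
Proof. by rewrite !mul_col_mx !mul1mx !mul0mx add_col_mx addr0 add0r. Qed.

Lemma tens_colL (K : fieldType) m1 m2 n p q s (A : 'M[K]_(m1, n)) (B : 'M[K]_(m2, n))
  (C : 'M[K]_(p, q)) (S : 'M[K]_(s, n * q)) :
  (A *t C <= S)%MS -> (B *t C <= S)%MS -> (col_mx A B *t C <= S)%MS.
Proof.
move=> hA hB; rewrite col_split tensmxDl; apply: addmx_sub.
  exact: submx_trans (tens_subL _ _ _) hA.
exact: submx_trans (tens_subL _ _ _) hB.
Qed.
Lemma tens_colR (K : fieldType) m1 m2 n p q s (A : 'M[K]_(m1, n)) (B : 'M[K]_(m2, n))
  (C : 'M[K]_(p, q)) (S : 'M[K]_(s, q * n)) :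
  (C *t A <= S)%MS -> (C *t B <= S)%MS -> (C *t col_mx A B <= S)%MS.
Proof.
move=> hA hB; rewrite col_split tensmxDr; apply: addmx_sub.
  exact: submx_trans (tens_subR _ _ _) hA.
exact: submx_trans (tens_subR _ _ _) hB.
Qed.

Lemma tens11 (K : fieldType) a b : (1%:M : 'M[K]_a) *t (1%:M : 'M[K]_b) = 1%:M.
Proof.
apply/matrixP => i j.
case: (mxtens_indexP i) => i1 i2; case: (mxtens_indexP j) => j1 j2.
rewrite tensmxE !mxE natrb; congr (_%:R).
rewrite -[_ == mxtens_index _]/(nat_of_ord (mxtens_index (i1, i2)) == nat_of_ord (mxtens_index (j1, j2)))%N.
by rewrite /= eq_addl_mul ?ltn_ord // xpair_eqE.
Qed.

Lemma tens_full (K : fieldType) m1 n1 m2 n2 (A : 'M[K]_(m1, n1)) (B : 'M[K]_(m2, n2)) :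
  row_full A -> row_full B -> row_full (A *t B).
Proof.
move=> /row_fullP [X hX] /row_fullP [Y hY]; apply/row_fullP.
by exists (X *t Y); rewrite tensmx_mul hX hY tens11.
Qed.

Lemma hom_gen (K : fieldType) a n (F0 : 'M[K]_(a, n)) (a0 : 'M[K]_a) (G : 'M[K]_n) :
  a0 *m F0 = F0 *m G *m G ->
  block_mx 0 1%:M a0 0 *m col_mx F0 (F0 *m G) = col_mx F0 (F0 *m G) *m G.
Proof.
move=> h; rewrite mul_block_col mul_col_mx !mul0mx add0r mul1mx addr0 h //.
Qed.

Theorem lemma7p3 (K : closedFieldType) (hK : (2 \in [pchar K])%N)
    (q l k : nat) (hq : exists e, q = (2 ^ e)%N)
    (hl : odd l) (hk : odd k) (hl0 : (0 < l)%N) (hk0 : (0 < k)%N)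
    (hlq : (l <= q %/ 2)%N) (hkq : (k <= q %/ 2)%N) :
  let g := kron (Vmx K l) (Vmx K k) in           (* action of u on V(2l) (x) V(2k) *)
  let B := kron (Vform K l) (Vform K k) in       (* tensor product form *)
  let I := Indmx (kron (Jblock K l) (Jblock K k)) in  (* Ind (V_l (x) V_k) *)
  exists W W' : 'M[K]_(2 * l * (2 * k)),
    [/\ stablemx W g, stablemx W' g,
        mxdirect (W + W') /\ (W + W' == 1%:M)%MS,
        W *m B *m W'^T = 0 &
        (exists f : 'M[K]_(l * k + l * k, 2 * l * (2 * k)),
            [/\ row_free f, (f == W)%MS & I *m f = f *m g]) /\
        (exists f : 'M[K]_(l * k + l * k, 2 * l * (2 * k)),
            [/\ row_free f, (f == W')%MS & I *m f = f *m g])].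
Proof.
move=> g B I; rewrite {}/g {}/B {}/I /Indmx !kron_tens.
set P1 := Pm K l; set P2 := Pm K k; set g1 := Vmx K l; set g2 := Vmx K k.
set G := g1 *t g2.
set F := P1 *t P2; set F' := P1 *t (P2 *m g2).
set f := col_mx F (F *m G); set f' := col_mx F' (F' *m G).
have hom : block_mx 0 1%:M (Jblock K l *t Jblock K k) 0 *m f = f *m G.
  apply: hom_gen; rewrite /F /G !tensmx_mul -!P_hom //.
have hom' : block_mx 0 1%:M (Jblock K l *t Jblock K k) 0 *m f' = f' *m G.
  apply: hom_gen; rewrite /F' /G !tensmx_mul.
  by congr (_ *t _); rewrite ?mulmxA P_hom.
have stab (h : 'M[K]_(l * k + l * k, 2 * l * (2 * k))) :
    block_mx 0 1%:M (Jblock K l *t Jblock K k) 0 *m h = h *m G ->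
    stablemx <<h>>%MS G.
  move=> hh; rewrite (eqmxMr _ (genmxE h)) genmxE -hh.
  exact: submxMl.
set T := col_mx f f'.
have fT : row_full T.
  rewrite -sub1mx.
  apply: (submx_trans (B := col_mx P1 (P1 *m g1) *t col_mx P2 (P2 *m g2))).
    by rewrite sub1mx tens_full // C_full.
  have Uu : (1%:M : 'M[K]_l) *t Jblock K k \in unitmx.
    by apply: tensmx_unit; rewrite ?unitmx1 ?J_unit // -lt0n.
  have hf : (f <= T)%MS by exact: colSl.
  have hf' : (f' <= T)%MS by exact: colSr.
  apply: tens_colL; apply: tens_colR.
  - exact: submx_trans (colSl _ _) hf.
  - exact: submx_trans (colSl _ _) hf'.
  - have -> : (P1 *m g1) *t P2 = invmx ((1%:M : 'M[K]_l) *t Jblock K k) *m (F' *m G).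
      rewrite /F' /G tensmx_mul P_hom // -[P1 *m g1]mul1mx -tensmx_mul mulKmx //.
      by rewrite mul1mx.
    exact: submx_trans (submxMl _ _) (submx_trans (colSr _ _) hf').
  - have -> : (P1 *m g1) *t (P2 *m g2) = F *m G by rewrite tensmx_mul.
    exact: submx_trans (colSr _ _) hf.
have eqS : (<<f>> + <<f'>> :=: T)%MS.
  exact: eqmx_trans (adds_eqmx (genmxE f) (genmxE f')) (addsmxE f f').
have rT : \rank T = (2 * l * (2 * k))%N by apply/eqP.
have rf := rank_leq_row f; have rf' := rank_leq_row f'.
have radd : (\rank T <= \rank f + \rank f')%N.
  have := mxrank_adds_leqif <<f>>%MS <<f'>>%MS; rewrite eqS !genmxE.
  by case.
have rff : \rank f = (l * k + l * k)%N by lia.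
have rff' : \rank f' = (l * k + l * k)%N by lia.
have ortho : f *m (Vform K l *t Vform K k) *m f'^T = 0.
  rewrite /f /f' tr_col_mx !mul_col_mx !mul_mx_row.
  have t1 : F *m (Vform K l *t Vform K k) *m F'^T = 0.
    by rewrite /F /F' !trmx_tens !tensmx_mul P_iso // tens0mx.
  have t2 : F *m (Vform K l *t Vform K k) *m (F' *m G)^T = 0.
    rewrite /F /F' /G !tensmx_mul !trmx_tens !tensmx_mul.
    by rewrite P_hom // !trmx_mul !mulmxA P_iso // mul0mx tensmx0.
  have t3 : F *m G *m (Vform K l *t Vform K k) *m F'^T = 0.
    by rewrite /F /F' /G !tensmx_mul !trmx_tens !tensmx_mul P_iso1 // tensmx0.
  have t4 : F *m G *m (Vform K l *t Vform K k) *m (F' *m G)^T = 0.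
    by rewrite /F /F' /G !tensmx_mul !trmx_tens !tensmx_mul P_iso1 // tens0mx.
  by rewrite t1 t2 t3 t4 !row_mx0 col_mx0.
exists <<f>>%MS.
exists <<f'>>%MS.
split.
- exact: stab.
- exact: stab.
- split.
    by rewrite mxdirectE /= !genmxE eqS rT rff rff'; apply/eqP; lia.
  by apply/andP; split; [exact: submx1 | rewrite eqS sub1mx].
- have /submxP [X ->] : (<<f>> <= f)%MS by rewrite genmxE.
  have /submxP [Y ->] : (<<f'>> <= f')%MS by rewrite genmxE.
  by rewrite trmx_mul !mulmxA -(mulmxA X) -(mulmxA X) ortho mulmx0 mul0mx.
- split.
    by exists f; split => //; [rewrite -row_leq_rank rff | apply/eqmxP; exact: eqmx_sym (genmxE _)].
  by exists f'; split => //; [rewrite -row_leq_rank rff' | apply/eqmxP; exact: eqmx_sym (genmxE _)].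
Qed.
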